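(* Let $A$ be a two-dimensional evolution algebra over an arbitrary field $\mathbb{K}$ such that $A^2=A$. Then the square $\mathfrak{S}(A)$ is equal to one of $\mathfrak{D}_1,\mathfrak{D}_2,\mathfrak{D}_3,\mathfrak{D}_4,\mathfrak{D}_5$. Moreover, up to isomorphism: (i) if $\mathfrak{S}(A)=\mathfrak{D}_1$ then $A\cong A_1$ (and $A_1$ is the only such algebra); (ii) if $\mathfrak{S}(A)=\mathfrak{D}_2$ then $A\cong A_{2,\alpha}$ for some $\alpha\in\mathbb{K}^\times$, and the isomorphism classes of such algebras correspond bijectively to the elements $\widetilde{\alpha}\in G_3/\!\sim$ via $\widetilde\alpha\mapsto A_{2,\alpha}$; (iii) if $\mathfrak{S}(A)=\mathfrak{D}_3$ then $A\cong A_{3,\alpha}$ for some $\alpha\in\mathbb{K}^\times$, and for each $\alpha\in\mathbb{K}^\times$ there is exactly one such algebra, $A_{3,\alpha}$ (distinct $\alpha$ giving non-isomorphic algebras); (iv) if $\mathfrak{S}(A)=\mathfrak{D}_4$ then $A\cong A_{4,\alpha}$ for some $\alpha\in\mathbb{K}^\times$, and for each $\alpha\in\mathbb{K}^\times$ there is exactly one such algebra, $A_{4,\alpha}$ (distinct $\alpha$ giving non-isomorphic algebras); (v) if $\mathfrak{S}(A)=\mathfrak{D}_5$ then $A\cong A_{5,\alpha,\beta}$ for some $\alpha,\beta\in\mathbb{K}^\times$ with $\alpha\beta\neq1$, and for each such pair $(\alpha,\beta)$ there is exactly one such algebra, $A_{5,\alpha,\beta}$, up to permutation of the components of the pair (i.e.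 $A_{5,\alpha,\beta}\cong A_{5,\alpha',\beta'}$ iff $(\alpha',\beta')\in\{(\alpha,\beta),(\beta,\alpha)\}$).
   Context: An evolution algebra over a field $\mathbb{K}$ is a $\mathbb{K}$-algebra $A$ with a basis $\{e_i\}$ (a natural basis) such that $e_ie_j=0$ for $i\neq j$. For a two-dimensional evolution algebra with natural basis $B=\{e_1,e_2\}$ write $e_1^2=\omega_{11}e_1+\omega_{21}e_2$, $e_2^2=\omega_{12}e_1+\omega_{22}e_2$. The pseudo-square of $A$ relative to $B$ is the set of ''edges'' $E_B\subseteq\{L,T,R,D\}$ (left, top, right, bottom), where $L\in E_B$ iff $\omega_{11}\neq0$, $T\in E_B$ iff $\omega_{12}\neq0$, $R\in E_B$ iff $\omega_{22}\neq0$, $D\in E_B$ iff $\omega_{21}\neq0$. The square $\mathfrak{S}(A)$ is the set of all pseudo-squares $E_B$ as $B$ ranges over all natural bases of $A$. Define the following sets of pseudo-squares: $\mathfrak{D}_1=\{\{L,R\}\}$, $\mathfrak{D}_2=\{\{T,D\}\}$, $\mathfrak{D}_3=\{\{L,T,R\},\{L,R,D\}\}$, $\mathfrak{D}_4=\{\{L,T,D\},\{T,R,D\}\}$, $\mathfrak{D}_5=\{\{L,T,R,D\}\}$. The algebras (each with natural basis $\{e_1,e_2\}$): $A_1$: $e_1^2=e_1$, $e_2^2=e_2$; $A_{2,\alpha}$: $e_1^2=e_2$, $e_2^2=\alpha e_1$; $A_{3,\alpha}$: $e_1^2=e_1$, $e_2^2=\alpha e_1+e_2$; $A_{4,\alpha}$: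 $e_1^2=\alpha e_2$, $e_2^2=e_1+e_2$; $A_{5,\alpha,\beta}$: $e_1^2=e_1+\beta e_2$, $e_2^2=\alpha e_1+e_2$ (here $\alpha,\beta\in\mathbb{K}^\times$, and $\alpha\beta\neq1$ for $A_{5,\alpha,\beta}$). $G_3$ denotes the group $\mathbb{K}^\times/(\mathbb{K}^\times)^3$, $\overline\rho$ the class of $\rho\in\mathbb{K}^\times$; $\sim$ is the equivalence relation on $G_3$ with $\overline\alpha\sim\overline\beta$ iff $\overline\alpha=\overline\beta$ or $\overline\alpha=\overline\beta^2$, and $\widetilde\alpha$ denotes the class of $\overline\alpha$ in $G_3/\!\sim$. *)

(* Defs.v *)
From HB Require Import structures.
From mathcomp Require Import all_boot all_order all_algebra.
Set Implicit Arguments. Unset Strict Implicit. Unset Printing Implicit Defensive.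
Import GRing.Theory.
Local Open Scope ring_scope.

Inductive edge := eL | eT | eR | eD.

Definition edge_code (e : edge) : 'I_4 :=
  match e with eL => inord 0 | eT => inord 1 | eR => inord 2 | eD => inord 3 end.
Definition edge_decode (i : 'I_4) : edge :=
  match val i with 0 => eL | 1 => eT | 2 => eR | _ => eD end.
Lemma edge_codeK : cancel edge_code edge_decode.
Proof. by case; rewrite /edge_decode /= inordK. Qed.

HB.instance Definition _ := Finite.copy edge (can_type edge_codeK).

(* ---------- Two-dimensional evolution algebras ----------
   The algebra is K^2 (row vectors 'rV[K]_2) with natural basis e_1, e_2
   (the standard basis), and structure matrix W with
       e_j^2 = \sum_i W i j e_i,
   i.e. W 0 0 = w11, W 0 1 = w12, W 1 0 = w21, W 1 1 = w22. *)

Definition evmul (K : fieldType) (W : 'M[K]_2) (x y : 'rV[K]_2) : 'rV[K]_2 :=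
  \sum_(j < 2) (x 0 j * y 0 j) *: (\row_(i < 2) W i j).

Definition smx (K : fieldType) (w11 w12 w21 w22 : K) : 'M[K]_2 :=
  \matrix_(i < 2, j < 2)
    if (val i == 0%N) then (if val j == 0%N then w11 else w12)
    else (if val j == 0%N then w21 else w22).

Definition square_full (K : fieldType) (W : 'M[K]_2) : Prop :=
  forall z : 'rV[K]_2, exists s : seq ('rV[K]_2 * 'rV[K]_2),
    z = \sum_(p <- s) evmul W p.1 p.2.

Definition natural_basis (K : fieldType) (W : 'M[K]_2) (f1 f2 : 'rV[K]_2) : Prop :=
  (forall a b : K, a *: f1 + b *: f2 = 0 -> a = 0 /\ b = 0) /\
  evmul W f1 f2 = 0 /\ evmul W f2 f1 = 0.

Definition pseudo_of (K : fieldType) (w11 w12 w21 w22 : K) : {set edge} :=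
  [set e | match e with
           | eL => w11 != 0 | eT => w12 != 0 | eR => w22 != 0 | eD => w21 != 0
           end].

Definition in_square (K : fieldType) (W : 'M[K]_2) (E : {set edge}) : Prop :=
  exists (f1 f2 : 'rV[K]_2) (w11 w12 w21 w22 : K),
    [/\ natural_basis W f1 f2,
        evmul W f1 f1 = w11 *: f1 + w21 *: f2,
        evmul W f2 f2 = w12 *: f1 + w22 *: f2 &
        E = pseudo_of w11 w12 w21 w22].

Definition square_is (K : fieldType) (W : 'M[K]_2) (S : {set {set edge}}) : Prop :=
  forall E : {set edge}, in_square W E <-> E \in S.

Definition D1 : {set {set edge}} := [set [set eL; eR]].
Definition D2 : {set {set edge}} := [set [set eT; eD]].
Definition D3 : {set {set edge}} := [set [set eL; eT; eR]; [set eL; eR; eD]].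
Definition D4 : {set {set edge}} := [set [set eL; eT; eD]; [set eT; eR; eD]].
Definition D5 : {set {set edge}} := [set [set eL; eT; eR; eD]].

Definition ev_iso (K : fieldType) (W W' : 'M[K]_2) : Prop :=
  exists M : 'M[K]_2, M \in unitmx /\
    forall x y : 'rV[K]_2, evmul W' (x *m M) (y *m M) = evmul W x y *m M.

Definition A1 (K : fieldType) : 'M[K]_2 := smx 1 0 0 1.          (* e1^2=e1, e2^2=e2 *)
Definition A2 (K : fieldType) (a : K) : 'M[K]_2 := smx 0 a 1 0.   (* e1^2=e2, e2^2=a e1 *)
Definition A3 (K : fieldType) (a : K) : 'M[K]_2 := smx 1 a 0 1.   (* e1^2=e1, e2^2=a e1+e2 *)
Definition A4 (K : fieldType) (a : K) : 'M[K]_2 := smx 0 1 a 1.   (* e1^2=a e2, e2^2=e1+e2 *)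
Definition A5 (K : fieldType) (a b : K) : 'M[K]_2 := smx 1 a b 1. (* e1^2=e1+b e2, e2^2=a e1+e2 *)

(* G_3 = K^x/(K^x)^3 : equality of classes of nonzero a, b *)
Definition cube_class_eq (K : fieldType) (a b : K) : Prop :=
  exists c : K, c != 0 /\ a = b * c ^+ 3.
(* the relation ~ on G_3 : abar = bbar or abar = bbar^2 *)
Definition sim3 (K : fieldType) (a b : K) : Prop :=
  cube_class_eq a b \/ cube_class_eq a (b ^+ 2).

(* Main.v *)
Require Import Defs.
From HB Require Import structures.
From mathcomp Require Import all_boot all_order all_algebra ring.
Import GRing.Theory.
Local Open Scope ring_scope.
Set Implicit Arguments. Unset Strict Implicit.

Lemma edge_eqE (x y : edge) : (x == y) = (match x, y with eL,eL|eT,eT|eR,eR|eD,eD => true | _,_ => false end).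
Proof. by apply/eqP/idP; [move->; case: y|case: x; case: y]. Qed.

Section Base.
Variable K : fieldType.
Implicit Types (a b c d p q r s u v k : K).

Notation i0 := (ord0 : 'I_2).
Notation i1 := (ord_max : 'I_2).

Lemma ord2P (j : 'I_2) : j = i0 \/ j = i1.
Proof. by case: j => [[|[|//]]] Hj; [left|right]; apply: val_inj. Qed.

Lemma sum2 (F : 'I_2 -> 'rV[K]_2) : \sum_(i < 2) F i = F i0 + F i1.
Proof. by rewrite big_ord_recl big_ord1; congr (_ + F _); apply: val_inj. Qed.

Lemma sum2K (F : 'I_2 -> K) : \sum_(i < 2) F i = F i0 + F i1.
Proof. by rewrite big_ord_recl big_ord1; congr (_ + F _); apply: val_inj. Qed.

Definition rv (u v : K) : 'rV[K]_2 := \row_(j < 2) (if val j == 0%N then u else v).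

Lemma rv0 u v : rv u v 0 i0 = u. Proof. by rewrite mxE. Qed.
Lemma rv1 u v : rv u v 0 i1 = v. Proof. by rewrite mxE. Qed.

Lemma rv_eta (x : 'rV[K]_2) : x = rv (x 0 i0) (x 0 i1).
Proof. by apply/rowP => j; case: (ord2P j) => ->; rewrite mxE. Qed.

Lemma rv_inj u v u' v' : rv u v = rv u' v' -> u = u' /\ v = v'.
Proof. by move=> h; split; [move: (congr1 (fun x : 'rV[K]_2 => x 0 i0) h)|move: (congr1 (fun x : 'rV[K]_2 => x 0 i1) h)]; rewrite !mxE. Qed.

Lemma rv_eq u v u' v' : u = u' -> v = v' -> rv u v = rv u' v'.
Proof. by move=> -> ->. Qed.

Lemma rv_zero : (0 : 'rV[K]_2) = rv 0 0.
Proof. by rewrite (rv_eta 0) !mxE. Qed.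

Lemma rv_add u v u' v' : rv u v + rv u' v' = rv (u + u') (v + v').
Proof. by apply/rowP => j; case: (ord2P j) => ->; rewrite !mxE. Qed.

Lemma rv_scale k u v : k *: rv u v = rv (k * u) (k * v).
Proof. by apply/rowP => j; case: (ord2P j) => ->; rewrite !mxE. Qed.

Lemma smx00 a b c d : smx a b c d i0 i0 = a. Proof. by rewrite mxE. Qed.
Lemma smx01 a b c d : smx a b c d i0 i1 = b. Proof. by rewrite mxE. Qed.
Lemma smx10 a b c d : smx a b c d i1 i0 = c. Proof. by rewrite mxE. Qed.
Lemma smx11 a b c d : smx a b c d i1 i1 = d. Proof. by rewrite mxE. Qed.

Lemma smx_eta (W : 'M[K]_2) : W = smx (W i0 i0) (W i0 i1) (W i1 i0) (W i1 i1).
Proof. by apply/matrixP => i j; case: (ord2P i) => ->; case: (ord2P j) => ->; rewrite mxE. Qed.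

Lemma smx_inj a b c d (a' b' c' d' : K) : smx a b c d = smx a' b' c' d' ->
  [/\ a = a', b = b', c = c' & d = d'].
Proof. by move=> h; split; [move: (congr1 (fun x : 'M[K]_2 => x i0 i0) h)|move: (congr1 (fun x : 'M[K]_2 => x i0 i1) h)
  |move: (congr1 (fun x : 'M[K]_2 => x i1 i0) h)|move: (congr1 (fun x : 'M[K]_2 => x i1 i1) h)]; rewrite !mxE. Qed.

Lemma smx1 : (1%:M : 'M[K]_2) = smx 1 0 0 1.
Proof. by apply/matrixP => i j; case: (ord2P i) => ->; case: (ord2P j) => ->; rewrite !mxE. Qed.

Lemma smx_mul a b c d (a' b' c' d' : K) : smx a b c d *m smx a' b' c' d' =
  smx (a * a' + b * c') (a * b' + b * d') (c * a' + d * c') (c * b' + d * d').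
Proof. by apply/matrixP => i j; case: (ord2P i) => ->; case: (ord2P j) => ->;
  rewrite !mxE sum2K !mxE. Qed.

Lemma rv_mul u v a b c d : rv u v *m smx a b c d = rv (u * a + v * c) (u * b + v * d).
Proof. by apply/rowP => j; case: (ord2P j) => ->; rewrite !mxE sum2K !mxE. Qed.

Lemma evmul_rv p q r s a b c d :
  evmul (smx p q r s) (rv a b) (rv c d) = rv (a * c * p + b * d * q) (a * c * r + b * d * s).
Proof. by rewrite /evmul sum2; apply/rowP => j; case: (ord2P j) => ->; rewrite !mxE. Qed.


Ltac kring := match goal with |- @eq _ ?a ?b => change (a = b :> GRing.Field.sort _) end; ring.

Ltac kfield := match goal with |- @eq _ ?a ?b => change (a = b :> GRing.Field.sort _) end; field.
Ltac nz := repeat first [done | assumption | apply/andP; split | apply: mulf_neq0 | apply: invr_neq0].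

Ltac from e := apply/eqP; rewrite -subr_eq0; apply/eqP; move/eqP: e; rewrite -subr_eq0 => /eqP e;
  apply: (etrans _ e); kring.

Lemma lin0 u0 u1 p q r s (A B C D : K) : u0 * p + u1 * r = 0 -> u0 * q+u1 * s = 0 -> u0 * C + u1 * D = 0 ->
  u0 * (A * p + B * q + C) + u1 * (A * r + B * s + D) = 0.
Proof.
move=> h1 h2 h3.
have -> : u0 * (A * p + B * q + C) + u1 * (A * r + B * s + D) = A * (u0 * p + u1 * r) + B * (u0 * q+u1 * s) + (u0 * C + u1 * D) by ring.
by rewrite h1 h2 h3; ring.
Qed.

Lemma full_fun p q r s (u0 u1 : K) : square_full (smx p q r s) ->
  u0 * p + u1 * r = 0 -> u0 * q+u1 * s = 0 -> u0 = 0 /\ u1 = 0.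
Proof.
move=> hf h1 h2.
have key : forall t : seq ('rV[K]_2 * 'rV[K]_2),
    u0 * (\sum_(x <- t) evmul (smx p q r s) x.1 x.2) 0 i0
  + u1 * (\sum_(x <- t) evmul (smx p q r s) x.1 x.2) 0 i1 = 0.
  elim=> [|[x y] t IH]; first by rewrite big_nil !mxE; ring.
  rewrite big_cons /= [x]rv_eta [y]rv_eta evmul_rv !mxE /=.
  by apply: lin0.
have [t1 e1] := hf (rv 1 0); have [t2 e2] := hf (rv 0 1).
have k1 := key t1; have k2 := key t2.
rewrite -e1 !mxE /= in k1; rewrite -e2 !mxE /= in k2.
split; [move: k1 | move: k2]; rewrite ?mulr1 ?mulr0 ?addr0 ?add0r //.
Qed.

Lemma full_det p q r s : square_full (smx p q r s) -> p * s - q * r != 0.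
Proof.
move=> hf; apply/eqP => d0.
case: (eqVneq p 0) => [p0|pn]; last first.
  have [_ /eqP] : - r = 0 /\ p = 0.
    by apply: (@full_fun p q r s (- r) p hf); [kring | rewrite -d0; kring].
  by rewrite (negbTE pn).
case: (eqVneq r 0) => [r0|rn]; last first.
  have [/eqP] : - r = 0 /\ p = 0.
    by apply: (@full_fun p q r s (- r) p hf); [rewrite p0; kring | rewrite -d0; kring].
  by rewrite oppr_eq0 (negbTE rn).
subst p r.
have [s0 q0] : s = 0 /\ - q = 0.
  by apply: (@full_fun 0 q 0 s s (- q) hf); kring.
have : q = 0 by rewrite -[q]opprK q0 oppr0.
move=> {}q0; subst s q.
have [/eqP] : (1 : K) = 0 /\ (0 : K) = 0.
  by apply: (@full_fun 0 0 0 0 1 0 hf); kring.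
by rewrite oner_eq0.
Qed.

Lemma det_full p q r s : p * s - q * r != 0 -> square_full (smx p q r s).
Proof.
move=> dn z; rewrite [z]rv_eta.
exists [:: (rv ((z 0 i0 * s - z 0 i1 * q)/(p * s - q * r)) ((p * z 0 i1 - r * z 0 i0)/(p * s - q * r)), rv 1 1)].
rewrite big_cons big_nil addr0 /= evmul_rv; apply: rv_eq; field; done.
Qed.

Lemma solve2 p q r s (X Y : K) : p * s - q * r != 0 -> X * p + Y * q = 0 -> X * r + Y * s = 0 -> X = 0 /\ Y = 0.
Proof.
move=> dn h1 h2.
have hX : X * (p * s - q * r) = s * (X * p + Y * q) - q * (X * r + Y * s) by kring.
have hY : Y * (p * s - q * r) = p * (X * r + Y * s) - r * (X * p + Y * q) by kring.
rewrite h1 h2 !mulr0 subr0 in hX hY.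
by split; apply/eqP; [move/eqP: hX | move/eqP: hY]; rewrite mulf_eq0 (negbTE dn) orbF.
Qed.

Lemma orth p q r s a b c d : p * s - q * r != 0 ->
  evmul (smx p q r s) (rv a b) (rv c d) = 0 -> a * c = 0 /\ b * d = 0.
Proof. by move=> dn; rewrite evmul_rv rv_zero => /rv_inj [h1 h2]; exact: (@solve2 p q r s (a * c) (b * d) dn h1 h2). Qed.

Lemma neq_eq (k1 k2 x w : K) : k1 != 0 -> k2 != 0 -> k1 * x = k2 * w -> (w != 0) = (x != 0).
Proof.
move=> h1 h2 e.
have : (k1 * x != 0) = (k2 * w != 0) by rewrite e.
by rewrite !mulf_eq0 (negbTE h1) (negbTE h2) /= => ->.
Qed.

Lemma ne1 (a b : K) : a * b = 1 -> a != 0.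
Proof. by move=> h; apply/eqP => a0; move: h; rewrite a0 mul0r => /eqP; rewrite eq_sym oner_eq0. Qed.

Lemma in_square_iff p q r s E : p * s - q * r != 0 ->
  (in_square (smx p q r s) E <-> E = pseudo_of p q r s \/ E = pseudo_of s r q p).
Proof.
move=> dn; split.
  case=> f1 [f2 [w11 [w12 [w21 [w22 [[hind [h12 h21]] e1 e2 ->]]]]]].
  move: hind h12 h21 e1 e2; rewrite [f1]rv_eta [f2]rv_eta.
  move: (f1 0 i0) (f1 0 i1) (f2 0 i0) (f2 0 i1) => a b c d hind h12 _ e1 e2.
  have [ac bd] := orth dn h12.
  rewrite evmul_rv !rv_scale rv_add in e1; have [e1a e1b] := rv_inj e1.
  rewrite evmul_rv !rv_scale rv_add in e2; have [e2a e2b] := rv_inj e2.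
  case: (eqVneq a 0) => [a0|an].
    subst a.
    have bn : b != 0.
      apply/eqP => b0; subst b.
      have [/eqP] : (1 : K) = 0 /\ (0 : K) = 0.
        by apply: hind; rewrite !rv_scale rv_add rv_zero; apply: rv_eq; kring.
      by rewrite oner_eq0.
    have d0 : d = 0 by move/eqP: bd; rewrite mulf_eq0 (negbTE bn) /= => /eqP.
    subst d.
    have cn : c != 0.
      apply/eqP => c0; subst c.
      have [_ /eqP] : (0 : K) = 0 /\ (1 : K) = 0.
        by apply: hind; rewrite !rv_scale rv_add rv_zero; apply: rv_eq; kring.
      by rewrite oner_eq0.
    right; apply/setP => -[]; rewrite !inE.
    - apply: (@neq_eq (b * b) b); rewrite ?mulf_neq0 ?bn //; from e1b.
    - apply: (@neq_eq (c * c) b); rewrite ?mulf_neq0 ?bn ?cn //; from e2b.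
    - apply: (@neq_eq (c * c) c); rewrite ?mulf_neq0 ?cn //; from e2a.
    - apply: (@neq_eq (b * b) c); rewrite ?mulf_neq0 ?bn ?cn //; from e1a.
  have c0 : c = 0 by move/eqP: ac; rewrite mulf_eq0 (negbTE an) /= => /eqP.
  subst c.
  have dn' : d != 0.
    apply/eqP => d0; subst d.
    have [_ /eqP] : (0 : K) = 0 /\ (1 : K) = 0.
      by apply: hind; rewrite !rv_scale rv_add rv_zero; apply: rv_eq; kring.
    by rewrite oner_eq0.
  have b0 : b = 0 by move/eqP: bd; rewrite mulf_eq0 (negbTE dn') orbF => /eqP.
  subst b.
  left; apply/setP => -[]; rewrite !inE.
  - apply: (@neq_eq (a * a) a); rewrite ?mulf_neq0 ?an //; from e1a.
  - apply: (@neq_eq (d * d) a); rewrite ?mulf_neq0 ?an ?dn' //; from e2a.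
  - apply: (@neq_eq (d * d) d); rewrite ?mulf_neq0 ?dn' //; from e2b.
  - apply: (@neq_eq (a * a) d); rewrite ?mulf_neq0 ?an ?dn' //; from e1b.
case=> ->.
  exists (rv 1 0), (rv 0 1), p, q, r, s; split.
  - split; last by split; rewrite evmul_rv rv_zero; apply: rv_eq; kring.
    move=> x y; rewrite !rv_scale rv_add rv_zero => /rv_inj [h1 h2].
    by split; [move: h1 | move: h2]; rewrite !(mulr0, mulr1, addr0, add0r).
  - by rewrite evmul_rv !rv_scale rv_add; apply: rv_eq; kring.
  - by rewrite evmul_rv !rv_scale rv_add; apply: rv_eq; kring.
  - by [].
exists (rv 0 1), (rv 1 0), s, r, q, p; split.
- split; last by split; rewrite evmul_rv rv_zero; apply: rv_eq; kring.
  move=> x y; rewrite !rv_scale rv_add rv_zero => /rv_inj [h1 h2].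
  by split; [move: h2 | move: h1]; rewrite !(mulr0, mulr1, addr0, add0r).
- by rewrite evmul_rv !rv_scale rv_add; apply: rv_eq; kring.
- by rewrite evmul_rv !rv_scale rv_add; apply: rv_eq; kring.
- by [].
Qed.

Lemma square_isP p q r s (S : {set {set edge}}) : p * s - q * r != 0 ->
  (forall E, (E = pseudo_of p q r s \/ E = pseudo_of s r q p) <-> E \in S) ->
  square_is (smx p q r s) S.
Proof. by move=> dn h E; rewrite in_square_iff. Qed.

Lemma square_mem p q r s (S : {set {set edge}}) : p * s - q * r != 0 -> square_is (smx p q r s) S ->
  pseudo_of p q r s \in S.
Proof. by move=> dn h; apply/h; rewrite in_square_iff //; left. Qed.

Lemma pseudoP p q r s X : pseudo_of p q r s = X ->
  [/\ (p != 0) = (eL \in X), (q != 0) = (eT \in X), (r != 0) = (eD \in X) & (s != 0) = (eR \in X)].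
Proof. by move=> <-; rewrite !inE. Qed.

Lemma set2P (X Y : {set edge}) E : (E = X \/ E = Y) <-> E \in [set X; Y].
Proof. by rewrite !inE; split => [[]->|/orP[]/eqP->]; rewrite ?eqxx ?orbT; auto. Qed.
Lemma set2P' (X Y : {set edge}) E : (E = X \/ E = Y) <-> E \in [set Y; X].
Proof. by rewrite !inE; split => [[]->|/orP[]/eqP->]; rewrite ?eqxx ?orbT; auto. Qed.
Lemma set1P (X : {set edge}) E : (E = X \/ E = X) <-> E \in [set X].
Proof. by rewrite !inE; split => [[]->|/eqP->]; auto. Qed.

Ltac pat := apply/setP => -[]; rewrite !inE !edge_eqE /= ?eqxx //.

Lemma sqD1 p s : p != 0 -> s != 0 -> square_is (smx p 0 0 s) D1.
Proof.
move=> hp hs; apply: square_isP; first by rewrite !mulr0 subr0 mulf_neq0.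
have -> : pseudo_of p 0 0 s = [set eL; eR] by pat; rewrite ?hp ?hs.
have -> : pseudo_of s 0 0 p = [set eL; eR] by pat; rewrite ?hp ?hs.
exact: set1P.
Qed.

Lemma sqD2 q r : q != 0 -> r != 0 -> square_is (smx 0 q r 0) D2.
Proof.
move=> hq hr; apply: square_isP; first by rewrite !mulr0 sub0r oppr_eq0 mulf_neq0.
have -> : pseudo_of 0 q r 0 = [set eT; eD] by pat; rewrite ?hq ?hr.
have -> : pseudo_of 0 r q 0 = [set eT; eD] by pat; rewrite ?hq ?hr.
exact: set1P.
Qed.

Lemma sqD3a p q s : p != 0 -> q != 0 -> s != 0 -> square_is (smx p q 0 s) D3.
Proof.
move=> hp hq hs; apply: square_isP; first by rewrite !mulr0 subr0 mulf_neq0.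
have -> : pseudo_of p q 0 s = [set eL; eT; eR] by pat; rewrite ?hp ?hq ?hs.
have -> : pseudo_of s 0 q p = [set eL; eR; eD] by pat; rewrite ?hp ?hq ?hs.
exact: set2P.
Qed.

Lemma sqD3b p r s : p != 0 -> r != 0 -> s != 0 -> square_is (smx p 0 r s) D3.
Proof.
move=> hp hr hs; apply: square_isP; first by rewrite !mul0r subr0 mulf_neq0.
have -> : pseudo_of p 0 r s = [set eL; eR; eD] by pat; rewrite ?hp ?hr ?hs.
have -> : pseudo_of s r 0 p = [set eL; eT; eR] by pat; rewrite ?hp ?hr ?hs.
exact: set2P'.
Qed.

Lemma sqD4a q r s : q != 0 -> r != 0 -> s != 0 -> square_is (smx 0 q r s) D4.
Proof.
move=> hq hr hs; apply: square_isP; first by rewrite !mul0r sub0r oppr_eq0 mulf_neq0.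
have -> : pseudo_of 0 q r s = [set eT; eR; eD] by pat; rewrite ?hr ?hq ?hs.
have -> : pseudo_of s r q 0 = [set eL; eT; eD] by pat; rewrite ?hr ?hq ?hs.
exact: set2P'.
Qed.

Lemma sqD4b p q r : p != 0 -> q != 0 -> r != 0 -> square_is (smx p q r 0) D4.
Proof.
move=> hp hq hr; apply: square_isP; first by rewrite !mulr0 sub0r oppr_eq0 mulf_neq0.
have -> : pseudo_of p q r 0 = [set eL; eT; eD] by pat; rewrite ?hr ?hq ?hp.
have -> : pseudo_of 0 r q p = [set eT; eR; eD] by pat; rewrite ?hr ?hq ?hp.
exact: set2P.
Qed.

Lemma sqD5 p q r s : p != 0 -> q != 0 -> r != 0 -> s != 0 -> p * s - q * r != 0 ->
  square_is (smx p q r s) D5.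
Proof.
move=> hp hq hr hs dn; apply: square_isP => //.
have -> : pseudo_of p q r s = [set eL; eT; eR; eD] by pat; rewrite ?hr ?hq ?hp ?hs.
have -> : pseudo_of s r q p = [set eL; eT; eR; eD] by pat; rewrite ?hr ?hq ?hp ?hs.
exact: set1P.
Qed.

Lemma smx_eq a b c d (a' b' c' d' : K) : a = a' -> b = b' -> c = c' -> d = d' -> smx a b c d = smx a' b' c' d'.
Proof. by move=> -> -> -> ->. Qed.

Lemma iso_diag p q r s (p' q' r' s' x y : K) : x != 0 -> y != 0 ->
  x * x * p' = x * p -> x * x * r' = y * r -> y * y * q' = x * q -> y * y * s' = y * s ->
  ev_iso (smx p q r s) (smx p' q' r' s').
Proof.
move=> xn yn h1 h2 h3 h4; exists (smx x 0 0 y); split.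
  suff /mulmx1_unit[] : smx x 0 0 y *m smx x^-1 0 0 y^-1 = 1%:M by [].
  by rewrite smx_mul smx1; apply: smx_eq; rewrite ?mulfV //; kring.
move=> u v; rewrite [u]rv_eta [v]rv_eta.
move: (u 0 i0) (u 0 i1) (v 0 i0) (v 0 i1) => u0 u1 v0 v1.
rewrite !rv_mul !evmul_rv rv_mul; apply: rv_eq.
  transitivity (u0 * v0 * (x * x * p') + u1 * v1 * (y * y * q')); first by kring.
  by rewrite h1 h3; kring.
transitivity (u0 * v0 * (x * x * r') + u1 * v1 * (y * y * s')); first by kring.
by rewrite h2 h4; kring.
Qed.

Lemma iso_anti p q r s (p' q' r' s' x y : K) : x != 0 -> y != 0 ->
  y * y * p' = y * s -> y * y * r' = x * q -> x * x * q' = y * r -> x * x * s' = x * p ->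
  ev_iso (smx p q r s) (smx p' q' r' s').
Proof.
move=> xn yn h1 h2 h3 h4; exists (smx 0 x y 0); split.
  suff /mulmx1_unit[] : smx 0 x y 0 *m smx 0 y^-1 x^-1 0 = 1%:M by [].
  by rewrite smx_mul smx1; apply: smx_eq; rewrite ?mulfV //; kring.
move=> u v; rewrite [u]rv_eta [v]rv_eta.
move: (u 0 i0) (u 0 i1) (v 0 i0) (v 0 i1) => u0 u1 v0 v1.
rewrite !rv_mul !evmul_rv rv_mul; apply: rv_eq.
  transitivity (u1 * v1 * (y * y * p') + u0 * v0 * (x * x * q')); first by kring.
  by rewrite h1 h3; kring.
transitivity (u1 * v1 * (y * y * r') + u0 * v0 * (x * x * s')); first by kring.
by rewrite h2 h4; kring.
Qed.

Lemma iso_inv p q r s (p' q' r' s' : K) : p' * s' - q' * r' != 0 ->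
  ev_iso (smx p q r s) (smx p' q' r' s') ->
  (exists x y : K, [/\ x != 0, y != 0 & [/\ x * x * p' = x * p, x * x * r' = y * r,
      y * y * q' = x * q & y * y * s' = y * s]]) \/
  (exists x y : K, [/\ x != 0, y != 0 & [/\ y * y * p' = y * s, y * y * r' = x * q,
      x * x * q' = y * r & x * x * s' = x * p]]).
Proof.
move=> dn [M [Mu H]].
have h1 := mulmxV Mu; have h2 := mulVmx Mu.
move: (invmx M) h1 h2 => N h1 h2.
rewrite [M]smx_eta [N]smx_eta smx_mul smx1 in h1.
rewrite [M]smx_eta [N]smx_eta smx_mul smx1 in h2.
rewrite [M]smx_eta in H.
move: (M i0 i0) (M i0 i1) (M i1 i0) (M i1 i1) (N i0 i0) (N i0 i1) (N i1 i0) (N i1 i1) h1 h2 H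
  => m00 m01 m10 m11 n00 n01 n10 n11 h1 h2 H {M N Mu}.
have [r0 _ _ r1] := smx_inj h1; have [c0 _ _ c1] := smx_inj h2.
have e1M a b c d : rv 1 0 *m smx a b c d = rv a b.
  by rewrite rv_mul; apply: rv_eq; kring.
have e2M a b c d : rv 0 1 *m smx a b c d = rv c d.
  by rewrite rv_mul; apply: rv_eq; kring.
have H12 := H (rv 1 0) (rv 0 1).
have e12 : evmul (smx p q r s) (rv 1 0) (rv 0 1) = 0.
  by rewrite evmul_rv rv_zero; apply: rv_eq; kring.
rewrite !e1M !e2M e12 mul0mx in H12.
have [o1 o2] := orth dn H12.
have H11 := H (rv 1 0) (rv 1 0); rewrite !e1M !evmul_rv rv_mul in H11.
have H22 := H (rv 0 1) (rv 0 1); rewrite !e2M !evmul_rv rv_mul in H22.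
have [a1 a2] := rv_inj H11; have [b1 b2] := rv_inj H22.
case: (eqVneq m00 0) => [z0|nz0].
  subst m00.
  have m01n : m01 != 0 by apply: (@ne1 _ n10); move: r0; rewrite mul0r add0r.
  have m10n : m10 != 0 by apply: (@ne1 _ n01); rewrite mulrC; move: c0; rewrite mulr0 add0r.
  have m11z : m11 = 0 by move/eqP: o2; rewrite mulf_eq0 (negbTE m01n) /= => /eqP.
  subst m11.
  right; exists m01, m10; split => //; split; [from b1 | from b2 | from a1 | from a2].
have m10z : m10 = 0 by move/eqP: o1; rewrite mulf_eq0 (negbTE nz0) /= => /eqP.
subst m10.
have m11n : m11 != 0 by apply: (@ne1 _ n11); move: r1; rewrite mul0r add0r.
have m01z : m01 = 0 by move/eqP: o2; rewrite mulf_eq0 (negbTE m11n) orbF => /eqP.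
subst m01.
left; exists m00, m11; split => //; split; [from a1 | from a2 | from b1 | from b2].
Qed.

Lemma smx_gen (P : 'M[K]_2 -> Prop) : (forall p q r s, P (smx p q r s)) -> forall W, P W.
Proof. by move=> h W; rewrite [W]smx_eta. Qed.

Ltac zget h := move/negbFE/eqP: h => h; subst.

Lemma part0 (W : 'M[K]_2) : square_full W ->
  square_is W D1 \/ square_is W D2 \/ square_is W D3 \/ square_is W D4 \/ square_is W D5.
Proof.
move: W; apply: smx_gen => p q r s hf; move: (full_det hf) => {hf}.
case: (eqVneq p 0) => [->|hp]; case: (eqVneq q 0) => [->|hq];
case: (eqVneq r 0) => [->|hr]; case: (eqVneq s 0) => [->|hs];
try by rewrite ?(mul0r, mulr0, subrr, eqxx).
all: move=> dn.
- by right; left; apply: sqD2.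
- by right; right; right; left; apply: sqD4a.
- by left; apply: sqD1.
- by right; right; left; apply: sqD3b.
- by right; right; left; apply: sqD3a.
- by right; right; right; left; apply: sqD4b.
- by right; right; right; right; apply: sqD5.
Qed.

Lemma cls1 (W : 'M[K]_2) : square_full W -> square_is W D1 -> ev_iso W (A1 K).
Proof.
move: W; apply: smx_gen => p q r s hf hS; have dn := full_det hf.
move: (square_mem dn hS); rewrite inE => /eqP /pseudoP; rewrite !inE !edge_eqE /=.
case=> hp hq hr hs; zget hq; zget hr.
by apply: (iso_diag (x := p) (y := s)) => //; kring.
Qed.


Lemma cls2 (W : 'M[K]_2) : square_full W -> square_is W D2 -> exists a : K, a != 0 /\ ev_iso W (A2 a).
Proof.
move: W; apply: smx_gen => p q r s hf hS; have dn := full_det hf.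
move: (square_mem dn hS); rewrite inE => /eqP /pseudoP; rewrite !inE !edge_eqE /=.
case=> hp hq hr hs; zget hp; zget hs.
exists (q / r); split; first by nz.
by apply: (iso_diag (x := r) (y := r)) => //; kfield; nz.
Qed.

Lemma cls3 (W : 'M[K]_2) : square_full W -> square_is W D3 -> exists a : K, a != 0 /\ ev_iso W (A3 a).
Proof.
move: W; apply: smx_gen => p q r s hf hS; have dn := full_det hf.
move: (square_mem dn hS); rewrite !inE => /orP[] /eqP /pseudoP; rewrite !inE !edge_eqE /=;
  case=> hp hq hr hs.
  zget hr; exists (p * q / (s * s)); split; first by nz.
  by apply: (iso_diag (x := p) (y := s)) => //; kfield; nz.
zget hq; exists (s * r / (p * p)); split; first by nz.
by apply: (iso_anti (x := p) (y := s)) => //; kfield; nz.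
Qed.

Lemma cls4 (W : 'M[K]_2) : square_full W -> square_is W D4 -> exists a : K, a != 0 /\ ev_iso W (A4 a).
Proof.
move: W; apply: smx_gen => p q r s hf hS; have dn := full_det hf.
move: (square_mem dn hS); rewrite !inE => /orP[] /eqP /pseudoP; rewrite !inE !edge_eqE /=;
  case=> hp hq hr hs.
  zget hs; exists (q * r * r / (p * p * p)); split; first by nz.
  by apply: (iso_anti (x := p) (y := p * p / r)) => //; nz; kfield; nz.
zget hp; exists (r * q * q / (s * s * s)); split; first by nz.
by apply: (iso_diag (x := s * s / q) (y := s)) => //; nz; kfield; nz.
Qed.

Lemma cls5 (W : 'M[K]_2) : square_full W -> square_is W D5 ->
  exists a b : K, [/\ a != 0, b != 0, a * b != 1 & ev_iso W (A5 a b)].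
Proof.
move: W; apply: smx_gen => p q r s hf hS; have dn := full_det hf.
move: (square_mem dn hS); rewrite !inE => /eqP /pseudoP; rewrite !inE !edge_eqE /=.
case=> hp hq hr hs.
exists (p * q / (s * s)), (s * r / (p * p)); split; [nz | nz | | ].
  apply/eqP => h; move: dn; rewrite subr_eq0; apply/negP/negPn/eqP.
  have -> : q * r = (p * q / (s * s) * (s * r / (p * p))) * (p * s) by kfield; nz.
  by rewrite h mul1r.
by apply: (iso_diag (x := p) (y := s)) => //; kfield; nz.
Qed.

Lemma sqid (x : K) : x != 0 -> x * x * 1 = x * 1 -> x = 1.
Proof. by move=> xn h; apply: (mulfI xn); move: h; rewrite !mulr1. Qed.

Lemma iso2 (a b : K) : a != 0 -> b != 0 -> (ev_iso (A2 a) (A2 b) <-> sim3 a b).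
Proof.
move=> an bn; split.
  move/iso_inv; case; first by rewrite !mul0r sub0r oppr_eq0 mulr1.
    move=> [x [y [xn yn [_ h2 h3 _]]]].
    have hy : y = x * x by move: h2; rewrite !mulr1.
    subst y; left; exists x; split => //.
    by apply: (mulfI xn); rewrite -h3; kring.
  move=> [x [y [xn yn [_ h2 h3 _]]]].
  have hy : y = x * x * b by move: h3; rewrite mulr1.
  subst y; right; exists x; split => //.
  by apply: (mulfI xn); rewrite -h2; kring.
case=> -[c [cn ->]].
  by apply: (iso_diag (x := c) (y := c * c)); rewrite ?mulf_neq0 //; kring.
by apply: (iso_anti (x := c) (y := c * c * b)); rewrite ?mulf_neq0 //; kring.
Qed.

Lemma iso3 (a b : K) : a != 0 -> b != 0 -> (ev_iso (A3 a) (A3 b) <-> a = b).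
Proof.
move=> an bn; split; last first.
  by move=> <-; apply: (iso_diag (x := 1) (y := 1)); rewrite ?oner_eq0 //; kring.
move/iso_inv; case; first by rewrite !mulr1 mulr0 subr0 oner_eq0.
  move=> [x [y [xn yn [h1 _ h3 h4]]]].
  have x1 := sqid xn h1; have y1 := sqid yn h4; subst x y.
  by move: h3; rewrite !mul1r.
move=> [x [y [xn yn [_ _ h3 _]]]].
by move/eqP: h3; rewrite mulr0 !mulf_eq0 (negbTE xn) (negbTE bn).
Qed.

Lemma iso4 (a b : K) : a != 0 -> b != 0 -> (ev_iso (A4 a) (A4 b) <-> a = b).
Proof.
move=> an bn; split; last first.
  by move=> <-; apply: (iso_diag (x := 1) (y := 1)); rewrite ?oner_eq0 //; kring.
move/iso_inv; case; first by rewrite mul0r sub0r oppr_eq0 mul1r.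
  move=> [x [y [xn yn [_ h2 h3 h4]]]].
  have y1 := sqid yn h4; subst y.
  have x1 : x = 1 by move: h3; rewrite !mulr1.
  subst x; by move: h2; rewrite !mul1r.
move=> [x [y [xn yn [_ _ _ h4]]]].
by move/eqP: h4; rewrite mulr1 mulr0 !mulf_eq0 (negbTE xn).
Qed.

Lemma iso5 (a b a' b' : K) : a != 0 -> b != 0 -> a * b != 1 ->
  a' != 0 -> b' != 0 -> a' * b' != 1 ->
  (ev_iso (A5 a b) (A5 a' b') <-> (a' = a /\ b' = b) \/ (a' = b /\ b' = a)).
Proof.
move=> an bn abn an' bn' abn'; split; last first.
  case=> -[-> ->].
    by apply: (iso_diag (x := 1) (y := 1)); rewrite ?oner_eq0 //; kring.
  by apply: (iso_anti (x := 1) (y := 1)); rewrite ?oner_eq0 //; kring.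
move/iso_inv; case; first by rewrite mulr1 subr_eq0 eq_sym.
  move=> [x [y [xn yn [h1 h2 h3 h4]]]].
  have x1 := sqid xn h1; have y1 := sqid yn h4; subst x y.
  by left; split; [move: h3 | move: h2]; rewrite !mul1r.
move=> [x [y [xn yn [h1 h2 h3 h4]]]].
have x1 := sqid xn h4; have y1 := sqid yn h1; subst x y.
by right; split; [move: h3 | move: h2]; rewrite !mul1r.
Qed.

End Base.

Theorem theorem3p7 (K : fieldType) :
  (* the square of A is one of D1, ..., D5 *)
  (forall W : 'M[K]_2, square_full W ->
     square_is W D1 \/ square_is W D2 \/ square_is W D3 \/
     square_is W D4 \/ square_is W D5) /\
  (* (i) *)
  ((forall W : 'M[K]_2, square_full W -> square_is W D1 -> ev_iso W (A1 K)) /\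
   square_full (A1 K) /\ square_is (A1 K) D1) /\
  (* (ii) *)
  ((forall W : 'M[K]_2, square_full W -> square_is W D2 ->
      exists a : K, a != 0 /\ ev_iso W (A2 a)) /\
   (forall a : K, a != 0 -> square_full (A2 a) /\ square_is (A2 a) D2) /\
   (forall a b : K, a != 0 -> b != 0 -> (ev_iso (A2 a) (A2 b) <-> sim3 a b))) /\
  (* (iii) *)
  ((forall W : 'M[K]_2, square_full W -> square_is W D3 ->
      exists a : K, a != 0 /\ ev_iso W (A3 a)) /\
   (forall a : K, a != 0 -> square_full (A3 a) /\ square_is (A3 a) D3) /\
   (forall a b : K, a != 0 -> b != 0 -> (ev_iso (A3 a) (A3 b) <-> a = b))) /\
  (* (iv) *)
  ((forall W : 'M[K]_2, square_full W -> square_is W D4 ->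
      exists a : K, a != 0 /\ ev_iso W (A4 a)) /\
   (forall a : K, a != 0 -> square_full (A4 a) /\ square_is (A4 a) D4) /\
   (forall a b : K, a != 0 -> b != 0 -> (ev_iso (A4 a) (A4 b) <-> a = b))) /\
  (* (v) *)
  ((forall W : 'M[K]_2, square_full W -> square_is W D5 ->
      exists a b : K, [/\ a != 0, b != 0, a * b != 1 & ev_iso W (A5 a b)]) /\
   (forall a b : K, a != 0 -> b != 0 -> a * b != 1 ->
      square_full (A5 a b) /\ square_is (A5 a b) D5) /\
   (forall a b a' b' : K, a != 0 -> b != 0 -> a * b != 1 ->
      a' != 0 -> b' != 0 -> a' * b' != 1 ->
      (ev_iso (A5 a b) (A5 a' b') <-> (a' = a /\ b' = b) \/ (a' = b /\ b' = a)))).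
Proof.
have o1 := oner_neq0 K.
split; first exact: part0.
split.
  split; first exact: cls1.
  split; last exact: sqD1.
  by apply: det_full; rewrite mulr1 mulr0 subr0.
split.
  split; first exact: cls2.
  split; last exact: iso2.
  move=> a an; split; last exact: sqD2.
  by apply: det_full; rewrite mul0r mulr1 sub0r oppr_eq0.
split.
  split; first exact: cls3.
  split; last exact: iso3.
  move=> a an; split; last exact: sqD3a.
  by apply: det_full; rewrite mulr1 mulr0 subr0.
split.
  split; first exact: cls4.
  split; last exact: iso4.
  move=> a an; split; last exact: sqD4a.
  by apply: det_full; rewrite mul0r mul1r sub0r oppr_eq0.
split; first exact: cls5.
split; last exact: iso5.
move=> a b an bn abn.
have dn : (1 : K) * 1 - a * b != 0 by rewrite mulr1 subr_eq0 eq_sym.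
by split; [apply: det_full | apply: sqD5].
Qed.
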